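(* Let $\lambda>0$. Then $\lim_{c_0\to\infty}M_2(\lambda,c_0)=\sqrt{2}$.
   Context: For $A\in\mathbb{R}^{3\times3}$ let $\lambda_1(A),\lambda_2(A),\lambda_3(A)$ be its singular values, $P(A)=\sum_{1\le i<j\le3}\lambda_i(A)\lambda_j(A)-\lambda\sum_i\lambda_i(A)$, $N(A)=\operatorname{tr}\operatorname{cof}A-\lambda\operatorname{tr}A$ (cof the cofactor matrix), and $G(A)=P(A)-N(A)$. $|\cdot|$ is the Frobenius norm and $\mathbf{1}$ the identity. For $c_0>0$, $M_2(\lambda,c_0)=\sup\{|G(A)|/|A-\lambda\mathbf{1}|^2:\ |A-\lambda\mathbf{1}|\ge c_0\}$. *)

(* Defs.v *)
From HB Require Import structures.
From mathcomp Require Import all_boot all_order all_algebra.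
From mathcomp Require Import all_classical all_reals all_analysis.
Set Implicit Arguments. Unset Strict Implicit. Unset Printing Implicit Defensive.
Import Order.TTheory GRing.Theory Num.Theory.
Local Open Scope ring_scope.
Local Open Scope classical_set_scope.

Section Defs.
Variable R : realType.

Definition frob (A : 'M[R]_3) : R := Num.sqrt (\sum_(i < 3) \sum_(j < 3) A i j ^+ 2).

Definition cof (A : 'M[R]_3) : 'M[R]_3 := \matrix_(i, j) cofactor A i j.

Definition singvals (A : 'M[R]_3) (l : 'I_3 -> R) : Prop :=
  (forall i, 0 <= l i) /\
  char_poly (A^T *m A) = \prod_(i < 3) ('X - (l i ^+ 2)%:P).

(* P(A) expressed through the singular values l *)
Definition Pfun (lam : R) (l : 'I_3 -> R) : R :=
  \sum_(i < 3) \sum_(j < 3 | (i < j)%N) l i * l j - lam * \sum_(i < 3) l i.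

Definition Nfun (lam : R) (A : 'M[R]_3) : R := \tr (cof A) - lam * \tr A.

Definition M2 (lam c0 : R) : \bar R :=
  ereal_sup [set x : \bar R | exists (A : 'M[R]_3) (l : 'I_3 -> R),
     [/\ c0 <= frob (A - lam%:M), singvals A l &
          x = (`|Pfun lam l - Nfun lam A| / frob (A - lam%:M) ^+ 2)%:E]].
End Defs.

(* Main.v *)
Require Import Defs.
From HB Require Import structures.
From mathcomp Require Import all_boot all_order all_algebra.
From mathcomp Require Import all_classical all_reals all_analysis.
Import Order.TTheory GRing.Theory Num.Theory.
Local Open Scope ring_scope.
Local Open Scope classical_set_scope.

From mathcomp Require Import ring lra.
Set Implicit Arguments. Unset Strict Implicit. Unset Printing Implicit Defensive.

Section Alg.
Variable R : realFieldType.
Implicit Types A B X W Y S L : 'M[R]_3.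
Definition ent A (i j : nat) := A (inord i) (inord j).
Lemma entE A i j : A i j = ent A i j.
Proof. by rewrite /ent !inord_val. Qed.

Lemma sum3 (f : 'I_3 -> R) : \sum_(k < 3) f k = f (inord 0) + f (inord 1) + f (inord 2).
Proof.
rewrite !big_ord_recr big_ord0 /= add0r; congr (f _ + f _ + f _); by apply/val_inj; rewrite /= inordK.
Qed.
Lemma ent_add A B i j : ent (A + B) i j = ent A i j + ent B i j.
Proof. by rewrite /ent mxE. Qed.
Lemma ent_sub A B i j : ent (A - B) i j = ent A i j - ent B i j.
Proof. by rewrite /ent !mxE. Qed.
Lemma ent_opp A i j : ent (- A) i j = - ent A i j.
Proof. by rewrite /ent !mxE. Qed.
Lemma ent_scale a A i j : ent (a *: A) i j = a * ent A i j.
Proof. by rewrite /ent !mxE. Qed.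
Lemma ent_tr A i j : ent A^T i j = ent A j i.
Proof. by rewrite /ent !mxE. Qed.
Lemma ent_scalar a (i j : nat) : (i < 3)%N -> (j < 3)%N -> ent a%:M i j = a *+ (i == j)%N.
Proof.
move=> hi hj; rewrite /ent !mxE; congr (_ *+ _).
by rewrite -val_eqE /= !inordK.
Qed.
Lemma ent_mul A B i j : ent (A *m B) i j =
  ent A i 0 * ent B 0 j + ent A i 1 * ent B 1 j + ent A i 2 * ent B 2 j.
Proof. by rewrite /ent mxE sum3. Qed.
Lemma tr3 A : \tr A = ent A 0 0 + ent A 1 1 + ent A 2 2.
Proof. by rewrite /mxtrace sum3. Qed.

Lemma mx3_eq A B :
  ent A 0 0 = ent B 0 0 -> ent A 0 1 = ent B 0 1 -> ent A 0 2 = ent B 0 2 ->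
  ent A 1 0 = ent B 1 0 -> ent A 1 1 = ent B 1 1 -> ent A 1 2 = ent B 1 2 ->
  ent A 2 0 = ent B 2 0 -> ent A 2 1 = ent B 2 1 -> ent A 2 2 = ent B 2 2 ->
  A = B.
Proof.
move=> *; apply/matrixP => i j; rewrite !entE.
by case: i => [[|[|[|i]]] hi] //; case: j => [[|[|[|j]]] hj].
Qed.

Lemma det3 A : \det A =
  ent A 0 0 * ent A 1 1 * ent A 2 2 + ent A 0 1 * ent A 1 2 * ent A 2 0 + ent A 0 2 * ent A 1 0 * ent A 2 1
  - ent A 0 0 * ent A 1 2 * ent A 2 1 - ent A 0 1 * ent A 1 0 * ent A 2 2 - ent A 0 2 * ent A 1 1 * ent A 2 0.
Proof.
rewrite (expand_det_row _ ord0) !big_ord_recr big_ord0 /= /cofactor.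
rewrite !(expand_det_row _ ord0) !big_ord_recr big_ord0 /= /cofactor.
rewrite !det_mx11 !mxE /= !entE /=.
rewrite !big_ord0 ?addn0 ?add0n ?addn1 ?add1n /=.
ring.
Qed.

Definition nx1 (i : nat) := nth 0%N [:: 1%N; 2%N; 0%N] i.
Definition nx2 (i : nat) := nth 0%N [:: 2%N; 0%N; 1%N] i.
Definition cof3 A (i j : nat) :=
  ent A (nx1 i) (nx1 j) * ent A (nx2 i) (nx2 j)
  - ent A (nx1 i) (nx2 j) * ent A (nx2 i) (nx1 j).

Lemma ent_adj A (i j : nat) : (i < 3)%N -> (j < 3)%N -> ent (\adj A) i j = cof3 A j i.
Proof.
move=> hi hj; rewrite /ent mxE /cofactor /cof3.
case: i hi => [|[|[|i]]] // _; case: j hj => [|[|[|j]]] // _ /=.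
all: rewrite (expand_det_row _ ord0) !big_ord_recr big_ord0 /= /cofactor.
all: rewrite !det_mx11 !mxE /= !entE /=.
all: rewrite !inordK //= /bump /=.
all: rewrite /nx1 /nx2 /=; ring.
Qed.

Lemma ent_delta (k l i j : nat) : (k < 3)%N -> (l < 3)%N -> (i < 3)%N -> (j < 3)%N ->
  ent (delta_mx (inord k) (inord l)) i j = ((i == k) && (j == l))%:R.
Proof.
move=> hk hl hi hj; rewrite /ent mxE; congr ((_ : bool)%:R).
by rewrite -!val_eqE /= !inordK.
Qed.

Lemma ent0 i j : ent (0 : 'M[R]_3) i j = 0.
Proof. by rewrite /ent mxE. Qed.

Ltac mxsimp := rewrite ?(ent0, ent_add, ent_sub, ent_opp, ent_scale, ent_tr, ent_mul) ?ent_scalar ?ent_delta //=.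

Lemma newton_det X : 6 * \det X = \tr X ^+ 3 - 3 * \tr X * \tr (X *m X) + 2 * \tr (X *m X *m X).
Proof. rewrite det3 !tr3; mxsimp; ring. Qed.

Lemma newton_adj X : 2 * \tr (\adj X) = \tr X ^+ 2 - \tr (X *m X).
Proof. rewrite !tr3 !ent_adj // /cof3 /nx1 /nx2 /=; mxsimp; ring. Qed.

Lemma det_xsub x X : \det (x%:M - X) =
  x ^+ 3 - \tr X * x ^+ 2 + (\tr X ^+ 2 - \tr (X *m X)) / 2 * x - \det X.
Proof. by rewrite !det3 !tr3; mxsimp; field. Qed.

Lemma lintest (S : 'M[R]_3) a b : (S - a%:M) *m (S - b%:M) = (S - b%:M) *m (S - a%:M).
Proof. apply: mx3_eq; mxsimp; ring. Qed.

Lemma char_horner n (A : 'M[R]_n) x : (char_poly A).[x] = \det (x%:M - A).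
Proof.
rewrite /char_poly /char_poly_mx /(\det _) horner_sum /(\det _); apply: eq_bigr => s _.
rewrite hornerM horner_exp !hornerE; congr (_ * _).
rewrite (big_morph _ (fun p q => hornerM p q x) (hornerC 1 x)).
by apply: eq_bigr => i _; rewrite !mxE !(hornerE, hornerMn).
Qed.

Lemma prod3 (T : comNzRingType) (f : 'I_3 -> T) : \prod_(k < 3) f k = f (inord 0) * f (inord 1) * f (inord 2).
Proof.
by rewrite !big_ord_recr big_ord0 /= mul1r; congr (f _ * f _ * f _); apply/val_inj; rewrite /= inordK.
Qed.

Lemma charpoly_inv (S : 'M[R]_3) (m : 'I_3 -> R) :
  char_poly S = \prod_(i < 3) ('X - (m i)%:P) ->
  [/\ \tr S = m (inord 0) + m (inord 1) + m (inord 2),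
      \tr (S *m S) = m (inord 0) ^+ 2 + m (inord 1) ^+ 2 + m (inord 2) ^+ 2,
      \det S = m (inord 0) * m (inord 1) * m (inord 2) &
      (S - (m (inord 0))%:M) *m (S - (m (inord 1))%:M) *m (S - (m (inord 2))%:M) = 0].
Proof.
move=> h.
set m0 := m (inord 0); set m1 := m (inord 1); set m2 := m (inord 2).
have ev x : \det (x%:M - S) = (x - m0) * (x - m1) * (x - m2).
  by rewrite -char_horner h prod3 !hornerE.
have e0 := ev 0; have e1 := ev 1; have e2 := ev (-1).
rewrite !det_xsub in e0 e1 e2.
have hT1 : \tr S = m0 + m1 + m2 by nra.
rewrite hT1 in e1 e2.
have hT2 : \tr (S *m S) = m0 ^+ 2 + m1 ^+ 2 + m2 ^+ 2 by nra.
have hd : \det S = m0 * m1 * m2 by nra.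
split => //.
have := Cayley_Hamilton S; rewrite h prod3 !rmorphM /= !rmorphB /= !horner_mx_X !horner_mx_C.
by rewrite -!mulmxE.
Qed.

Definition frame (E0 E1 E2 : 'M[R]_3) : Prop :=
  [/\ [/\ E0^T = E0, E1^T = E1 & E2^T = E2],
      [/\ E0 *m E0 = E0, E1 *m E1 = E1 & E2 *m E2 = E2],
      [/\ E0 *m E1 = 0, E0 *m E2 = 0 & E1 *m E2 = 0] /\ [/\ E1 *m E0 = 0, E2 *m E0 = 0 & E2 *m E1 = 0],
      E0 + E1 + E2 = 1%:M &
      [/\ \tr E0 = 1, \tr E1 = 1 & \tr E2 = 1]].

Definition comb (E0 E1 E2 : 'M[R]_3) (a b c : R) := a *: E0 + b *: E1 + c *: E2.

Lemma frame_swap01 E0 E1 E2 : frame E0 E1 E2 -> frame E1 E0 E2.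
Proof.
case=> [[s0 s1 s2] [i0 i1 i2] [[p01 p02 p12] [p10 p20 p21]] hs [t0 t1 t2]]; split => //.
by rewrite (addrC E1).
Qed.
Lemma frame_swap12 E0 E1 E2 : frame E0 E1 E2 -> frame E0 E2 E1.
Proof.
case=> [[s0 s1 s2] [i0 i1 i2] [[p01 p02 p12] [p10 p20 p21]] hs [t0 t1 t2]]; split => //.
by rewrite -addrA (addrC E2) addrA.
Qed.

Section Frame.
Variables E0 E1 E2 : 'M[R]_3.
Hypothesis hF : frame E0 E1 E2.

Lemma comb_mul a b c a' b' c' :
  comb E0 E1 E2 a b c *m comb E0 E1 E2 a' b' c' = comb E0 E1 E2 (a * a') (b * b') (c * c').
Proof.
case: hF => [_ [i0 i1 i2] [[p01 p02 p12] [p10 p20 p21]] _ _].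
rewrite /comb !mulmxDl !mulmxDr -!scalemxAl -!scalemxAr !scalerA.
by rewrite i0 i1 i2 p01 p10 p02 p20 p12 p21 !scaler0 !addr0 !add0r.
Qed.

Lemma comb_tr a b c : \tr (comb E0 E1 E2 a b c) = a + b + c.
Proof.
case: hF => [_ _ _ _ [t0 t1 t2]].
by rewrite /comb !mxtraceD !mxtraceZ t0 t1 t2 !mulr1.
Qed.

Lemma comb_T a b c : (comb E0 E1 E2 a b c)^T = comb E0 E1 E2 a b c.
Proof.
case: hF => [[s0 s1 s2] _ _ _ _].
by rewrite /comb !linearD !linearZ /= s0 s1 s2.
Qed.

Lemma comb_scalar k : comb E0 E1 E2 k k k = k%:M.
Proof.
case: hF => [_ _ _ hs _].
by rewrite /comb -!scalerDr hs scalemx1.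
Qed.

Lemma comb_det a b c : \det (comb E0 E1 E2 a b c) = a * b * c.
Proof.
have := newton_det (comb E0 E1 E2 a b c).
rewrite !comb_mul !comb_tr => h.
have h6 : (6 : R) != 0 by rewrite pnatr_eq0.
apply: (mulfI h6); rewrite h; ring.
Qed.

Lemma comb_mulW (W : 'M[R]_3) a b c :
  \tr (W *m comb E0 E1 E2 a b c) = a * \tr (W *m E0) + b * \tr (W *m E1) + c * \tr (W *m E2).
Proof.
by rewrite /comb !mulmxDr -!scalemxAr !mxtraceD !mxtraceZ.
Qed.

End Frame.

Lemma rot_adj W : W^T *m W = 1%:M -> \det W = 1 -> \adj W = W^T.
Proof.
move=> h hd; have h' := mulmx1C h.
by rewrite -[\adj W]mulmx1 -h' mulmxA mul_adj_mx hd mul1mx.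
Qed.

Lemma rot_scalar (x y p q a b z : R) : x^+2 + q^+2 + a^+2 = 1 -> p^+2 + y^+2 + b^+2 = 1 ->
  x * p + q * y + a * b = 0 -> z = x * y - p * q -> -1 <= x + y + z.
Proof.
move=> h1 h2 h3 ->.
have hd2 : (x * y - p * q) ^+ 2 = 1 - a ^+ 2 - b ^+ 2.
  have -> : (x * y - p * q) ^+ 2 = (x^+2 + q^+2) * (p^+2 + y^+2) - (x * p + q * y) ^+ 2 by ring.
  have -> : x^+2 + q^+2 = 1 - a^+2 by lra.
  have -> : p^+2 + y^+2 = 1 - b^+2 by lra.
  have -> : x * p + q * y = - (a * b) by lra.
  ring.
have hd1 : -1 <= x * y - p * q by nra.
have ht : (x + y) ^+ 2 <= (1 + (x * y - p * q)) ^+ 2.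
  have : 0 <= (p - q) ^+ 2 by apply: sqr_ge0.
  nra.
nra.
Qed.

Lemma rot_tr W : W^T *m W = 1%:M -> \det W = 1 -> -1 <= \tr W.
Proof.
move=> h hd; have ha := rot_adj h hd.
have e22 : ent (\adj W) 2 2 = ent W^T 2 2 by rewrite ha.
rewrite ent_adj // /cof3 /nx1 /nx2 /= ent_tr in e22.
have c00 : ent (W^T *m W) 0 0 = ent (1%:M) 0 0 by rewrite h.
have c11 : ent (W^T *m W) 1 1 = ent (1%:M) 1 1 by rewrite h.
have c01 : ent (W^T *m W) 0 1 = ent (1%:M) 0 1 by rewrite h.
move: c00 c11 c01; mxsimp => c00 c11 c01.
rewrite tr3; apply: (rot_scalar (p := ent W 0 1) (q := ent W 1 0) (a := ent W 2 0) (b := ent W 2 1)).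
- by rewrite !expr2.
- by rewrite !expr2.
- exact: c01.
- by rewrite -e22.
Qed.


Lemma two_bound (r : R) (hr : 0 < r) (hr2 : r ^+ 2 = 2) x y z : 0 <= x -> 0 <= y -> 0 <= z -> 2 * z * (x + y) <= r * (x ^+ 2 + y ^+ 2 + z ^+ 2).
Proof.
move=> hx hy hz.
have e : r * (x ^+ 2 + y ^+ 2 + z ^+ 2) - 2 * z * (x + y) =
  r / 2 * (x - y) ^+ 2 + r / 2 * (x + y - r * z) ^+ 2.
  apply/eqP; rewrite -subr_eq0; apply/eqP.
  have -> : r * (x ^+ 2 + y ^+ 2 + z ^+ 2) - 2 * z * (x + y) -
    (r / 2 * (x - y) ^+ 2 + r / 2 * (x + y - r * z) ^+ 2) =
    (r ^+ 2 - 2) * (z * (x + y) - r / 2 * z ^+ 2) by field.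
  by rewrite hr2 subrr mul0r.
have : 0 <= r / 2 * (x - y) ^+ 2 + r / 2 * (x + y - r * z) ^+ 2.
  by apply: addr_ge0; apply: mulr_ge0; rewrite ?sqr_ge0 ?divr_ge0 ?ltW.
lra.
Qed.

Lemma key_c (r a b c z0 z1 z2 : R) (hr : 0 < r) (hr2 : r ^+ 2 = 2) (ha : 0 <= a) (hb : 0 <= b) (hc : 0 <= c) (c1 : -1 <= z0 + z1 + z2) (c2 : -1 <= z0 - z1 - z2) (c3 : -1 <= - z0 + z1 - z2) (c4 : -1 <= - z0 - z1 + z2) (hac : a <= c) (hbc : b <= c) :
  a * b + a * c + b * c - (b * c * z0 + a * c * z1 + a * b * z2) <= r * (a ^+ 2 + b ^+ 2 + c ^+ 2).
Proof.
have hca : 0 <= c - a by lra.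
have hcb : 0 <= c - b by lra.
have p1 := mulr_ge0 hb hc; have p2 := mulr_ge0 ha hc.
have p3 := mulr_ge0 hb hca; have p4 := mulr_ge0 ha hcb.
have t1 : 0 <= (b * c + a * c) / 2 * (1 + (z0 + z1 + z2)).
  apply: mulr_ge0; last lra. apply: divr_ge0; lra.
have t2 : 0 <= (b * c - a * b) / 2 * (1 + (z0 - z1 - z2)).
  apply: mulr_ge0; last lra. apply: divr_ge0; lra.
have t3 : 0 <= (a * c - a * b) / 2 * (1 + (- z0 + z1 - z2)).
  apply: mulr_ge0; last lra. apply: divr_ge0; lra.
have := two_bound hr hr2 ha hb hc.
lra.
Qed.

Lemma key_a (r a b c z0 z1 z2 : R) (hr : 0 < r) (hr2 : r ^+ 2 = 2) (ha : 0 <= a) (hb : 0 <= b) (hc : 0 <= c) (c1 : -1 <= z0 + z1 + z2) (c2 : -1 <= z0 - z1 - z2) (c3 : -1 <= - z0 + z1 - z2) (c4 : -1 <= - z0 - z1 + z2) (hba : b <= a) (hca : c <= a) :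
  a * b + a * c + b * c - (b * c * z0 + a * c * z1 + a * b * z2) <= r * (a ^+ 2 + b ^+ 2 + c ^+ 2).
Proof.
have hab : 0 <= a - b by lra.
have hac : 0 <= a - c by lra.
have p1 := mulr_ge0 ha hb; have p2 := mulr_ge0 ha hc.
have p3 := mulr_ge0 hc hab; have p4 := mulr_ge0 hb hac.
have t1 : 0 <= (a * c + a * b) / 2 * (1 + (z0 + z1 + z2)).
  apply: mulr_ge0; last lra. apply: divr_ge0; lra.
have t3 : 0 <= (a * c - b * c) / 2 * (1 + (- z0 + z1 - z2)).
  apply: mulr_ge0; last lra. apply: divr_ge0; lra.
have t4 : 0 <= (a * b - b * c) / 2 * (1 + (- z0 - z1 + z2)).
  apply: mulr_ge0; last lra. apply: divr_ge0; lra.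
have := two_bound hr hr2 hb hc ha.
lra.
Qed.

Lemma key_b (r a b c z0 z1 z2 : R) (hr : 0 < r) (hr2 : r ^+ 2 = 2) (ha : 0 <= a) (hb : 0 <= b) (hc : 0 <= c) (c1 : -1 <= z0 + z1 + z2) (c2 : -1 <= z0 - z1 - z2) (c3 : -1 <= - z0 + z1 - z2) (c4 : -1 <= - z0 - z1 + z2) (hab : a <= b) (hcb : c <= b) :
  a * b + a * c + b * c - (b * c * z0 + a * c * z1 + a * b * z2) <= r * (a ^+ 2 + b ^+ 2 + c ^+ 2).
Proof.
have hba : 0 <= b - a by lra.
have hbc : 0 <= b - c by lra.
have p1 := mulr_ge0 ha hb; have p2 := mulr_ge0 hb hc.
have p3 := mulr_ge0 hc hba; have p4 := mulr_ge0 ha hbc.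
have t1 : 0 <= (b * c + a * b) / 2 * (1 + (z0 + z1 + z2)).
  apply: mulr_ge0; last lra. apply: divr_ge0; lra.
have t2 : 0 <= (b * c - a * c) / 2 * (1 + (z0 - z1 - z2)).
  apply: mulr_ge0; last lra. apply: divr_ge0; lra.
have t4 : 0 <= (a * b - a * c) / 2 * (1 + (- z0 - z1 + z2)).
  apply: mulr_ge0; last lra. apply: divr_ge0; lra.
have := two_bound hr hr2 ha hc hb.
lra.
Qed.

Lemma key_scalar (r a b c z0 z1 z2 : R) (hr : 0 < r) (hr2 : r ^+ 2 = 2) (ha : 0 <= a) (hb : 0 <= b) (hc : 0 <= c) (c1 : -1 <= z0 + z1 + z2) (c2 : -1 <= z0 - z1 - z2) (c3 : -1 <= - z0 + z1 - z2) (c4 : -1 <= - z0 - z1 + z2) :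
  a * b + a * c + b * c - (b * c * z0 + a * c * z1 + a * b * z2) <= r * (a ^+ 2 + b ^+ 2 + c ^+ 2).
Proof.
case: (lerP a c) => hac; case: (lerP b c) => hbc.
- exact: (key_c hr hr2 ha hb hc c1 c2 c3 c4).
- apply: (key_b hr hr2 ha hb hc c1 c2 c3 c4); lra.
- apply: (key_a hr hr2 ha hb hc c1 c2 c3 c4); lra.
- case: (lerP a b) => hab.
  + apply: (key_b hr hr2 ha hb hc c1 c2 c3 c4); lra.
  + apply: (key_a hr hr2 ha hb hc c1 c2 c3 c4); lra.
Qed.

Lemma key_inv A E0 E1 E2 (r a b c : R) : frame E0 E1 E2 -> 0 < r -> r ^+ 2 = 2 ->
  0 < a -> 0 < b -> 0 < c ->
  A^T *m A = comb E0 E1 E2 (a ^+ 2) (b ^+ 2) (c ^+ 2) ->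
  a * b + a * c + b * c - \tr (\adj A) <= r * (a ^+ 2 + b ^+ 2 + c ^+ 2).
Proof.
move=> hF hr hr2 ha hb hc hS.
have hp : 0 < a * b * c by rewrite !mulr_gt0.
have hpn : a * b * c != 0 by rewrite gt_eqF.
have an : a != 0 by rewrite gt_eqF.
have bn : b != 0 by rewrite gt_eqF.
have cn : c != 0 by rewrite gt_eqF.
set S := A^T *m A.
have hS' : S = comb E0 E1 E2 (a ^+ 2) (b ^+ 2) (c ^+ 2) := hS.
have detS : \det S = (a * b * c) ^+ 2 by rewrite hS' comb_det //; ring.
have detA2 : \det A ^+ 2 = (a * b * c) ^+ 2 by rewrite -detS /S det_mulmx det_tr expr2.
have dA : \det A != 0.
  apply/eqP => h0; move: detA2; rewrite h0 expr0n /= => /esym/eqP.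
  by rewrite sqrf_eq0 (negbTE hpn).
set D := \adj A.
have h1 : S *m (D *m D^T) = (\det A ^+ 2)%:M.
  rewrite /S /D trmx_adj -!mulmxA (mulmxA A) mul_mx_adj mul_scalar_mx -scalemxAr.
  by rewrite mul_mx_adj det_tr scale_scalar_mx expr2.
set K := comb E0 E1 E2 (b * c) (a * c) (a * b).
have h2 : S *m (K *m K) = ((a * b * c) ^+ 2)%:M.
  by rewrite hS' /K !comb_mul // -(comb_scalar hF); congr comb; ring.
set Si := comb E0 E1 E2 (1 / a ^+ 2) (1 / b ^+ 2) (1 / c ^+ 2).
have hSi : Si *m S = 1%:M.
  by rewrite hS' /Si comb_mul // -(comb_scalar hF 1); congr comb; field.
have hDD : D *m D^T = K *m K.
  have : S *m (D *m D^T) = S *m (K *m K) by rewrite h1 h2 detA2.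
  by move/(congr1 (mulmx Si)); rewrite [LHS]mulmxA [RHS]mulmxA hSi !mul1mx.
set Ki := comb E0 E1 E2 (1 / (b * c)) (1 / (a * c)) (1 / (a * b)).
have hKiK : Ki *m K = 1%:M.
  rewrite /Ki /K comb_mul // -(comb_scalar hF 1); congr comb; by field; rewrite ?an ?bn ?cn.
have hKKi : K *m Ki = 1%:M.
  by rewrite /Ki /K comb_mul // -(comb_scalar hF 1); congr comb; field; rewrite ?an ?bn ?cn.
set W := Ki *m D.
have hW1 : W *m W^T = 1%:M.
  rewrite /W trmx_mul /Ki comb_T // -/Ki -mulmxA (mulmxA D) hDD.
  by rewrite !mulmxA hKiK mul1mx hKKi.
have hW : W^T *m W = 1%:M by apply: mulmx1C.
have detD : \det D = \det A ^+ 2.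
  have := det_mulmx A D; rewrite /D mul_mx_adj det_scalar => h.
  apply: (mulfI dA); rewrite -h; ring.
have detW : \det W = 1.
  rewrite /W det_mulmx /Ki comb_det // detD detA2; field.
  by rewrite an bn cn.
have hKW : K *m W = D by rewrite /W mulmxA hKKi mul1mx.
have trD : \tr D = \tr (W *m K) by rewrite -hKW mxtrace_mulC.
rewrite /K comb_mulW // in trD.
set z0 := \tr (W *m E0) in trD; set z1 := \tr (W *m E1) in trD; set z2 := \tr (W *m E2) in trD.
have gen x y z : x ^+ 2 = 1 -> y ^+ 2 = 1 -> z ^+ 2 = 1 -> x * y * z = 1 ->
    -1 <= x * z0 + y * z1 + z * z2.
  move=> hx hy hz hxyz; set X := comb E0 E1 E2 x y z.
  have hXX : X^T *m X = 1%:M.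
    by rewrite /X comb_T // comb_mul // -!expr2 hx hy hz comb_scalar.
  have hWX : (W *m X)^T *m (W *m X) = 1%:M.
    by rewrite trmx_mul -mulmxA (mulmxA W^T) hW mul1mx hXX.
  have hdet : \det (W *m X) = 1 by rewrite det_mulmx detW /X comb_det // hxyz mul1r.
  by have := rot_tr hWX hdet; rewrite /X comb_mulW.
have sq1 : (1 : R) ^+ 2 = 1 by rewrite expr1n.
have sqm : (-1 : R) ^+ 2 = 1 by rewrite sqrrN expr1n.
have q1 : (1 : R) * 1 * 1 = 1 by ring.
have q2 : (1 : R) * -1 * -1 = 1 by ring.
have q3 : (-1 : R) * 1 * -1 = 1 by ring.
have q4 : (-1 : R) * -1 * 1 = 1 by ring.
have c1 : -1 <= z0 + z1 + z2.
  by have := gen 1 1 1 sq1 sq1 sq1 q1; lra.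
have c2 : -1 <= z0 - z1 - z2.
  by have := gen 1 (-1) (-1) sq1 sqm sqm q2; lra.
have c3 : -1 <= - z0 + z1 - z2.
  by have := gen (-1) 1 (-1) sqm sq1 sqm q3; lra.
have c4 : -1 <= - z0 - z1 + z2.
  by have := gen (-1) (-1) 1 sqm sqm sq1 q4; lra.
rewrite trD.
by apply: key_scalar => //; apply: ltW.
Qed.

Lemma sym_nil Y : Y^T = Y -> Y *m Y = 0 -> Y = 0.
Proof.
move=> hs hn.
have ht : \tr (Y^T *m Y) = 0 by rewrite hs hn mxtrace0.
rewrite tr3 in ht; move: ht; mxsimp => ht.
apply: mx3_eq; rewrite ent0; nra.
Qed.

Lemma lin_T S a : S^T = S -> (S - a%:M)^T = S - a%:M.
Proof. by move=> hs; rewrite linearB /= hs tr_scalar_mx. Qed.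

Lemma lin_comm S a b : (S - a%:M) *m (S - b%:M) = (S - b%:M) *m (S - a%:M).
Proof. apply: mx3_eq; mxsimp; ring. Qed.

Lemma lin_mul S a b : (S - a%:M) *m (S - b%:M) = S *m S - (a + b) *: S + (a * b)%:M.
Proof. apply: mx3_eq; mxsimp; ring. Qed.

Lemma Xlin X S mu a : X *m S = mu *: X -> X *m (S - a%:M) = (mu - a) *: X.
Proof. by move=> h; rewrite mulmxBr h mul_mx_scalar scalerBl. Qed.

Lemma Xlin2 X S mu a b : X *m S = mu *: X ->
  X *m ((S - a%:M) *m (S - b%:M)) = ((mu - a) * (mu - b)) *: X.
Proof.
move=> h; rewrite mulmxA (Xlin _ h) -scalemxAl (Xlin _ h) scalerA; congr (_ *: _); ring.
Qed.

Lemma ch_swap12 S a b c : (S - a%:M) *m (S - b%:M) *m (S - c%:M) = 0 ->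
  (S - b%:M) *m (S - a%:M) *m (S - c%:M) = 0.
Proof. by rewrite lin_comm. Qed.
Lemma ch_swap23 S a b c : (S - a%:M) *m (S - b%:M) *m (S - c%:M) = 0 ->
  (S - a%:M) *m (S - c%:M) *m (S - b%:M) = 0.
Proof. by rewrite -!mulmxA lin_comm. Qed.

Lemma spec_distinct S m0 m1 m2 : S^T = S -> m0 != m1 -> m0 != m2 -> m1 != m2 ->
  (S - m0%:M) *m (S - m1%:M) *m (S - m2%:M) = 0 ->
  \tr S = m0 + m1 + m2 -> \tr (S *m S) = m0 ^+ 2 + m1 ^+ 2 + m2 ^+ 2 ->
  exists E0 E1 E2, frame E0 E1 E2 /\ S = comb E0 E1 E2 m0 m1 m2.
Proof.
move=> hs h01 h02 h12 ch t1 t2.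
have h10 : m1 != m0 by rewrite eq_sym.
have h20 : m2 != m0 by rewrite eq_sym.
have h21 : m2 != m1 by rewrite eq_sym.
have hne : [&& m2 - m1 != 0, m2 - m0 != 0, m1 - m2 != 0, m1 - m0 != 0, m0 - m2 != 0
    & m0 - m1 != 0] by rewrite !subr_eq0 h01 h02 h12 h10 h20 h21.
have s01 : m0 - m1 != 0 by rewrite subr_eq0.
have s02 : m0 - m2 != 0 by rewrite subr_eq0.
have s12 : m1 - m2 != 0 by rewrite subr_eq0.
set F0 := (S - m1%:M) *m (S - m2%:M).
set F1 := (S - m0%:M) *m (S - m2%:M).
set F2 := (S - m0%:M) *m (S - m1%:M).
have rS (X : 'M[R]_3) mu : X *m (S - mu%:M) = 0 -> X *m S = mu *: X.
  by move=> h; apply/eqP; rewrite -subr_eq0 -mul_mx_scalar -mulmxBr h.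
have F0S : F0 *m S = m0 *: F0.
  by apply: rS; rewrite /F0; apply: ch_swap23; apply: ch_swap12; exact: ch.
have F1S : F1 *m S = m1 *: F1 by apply: rS; rewrite /F1; apply: ch_swap23; exact: ch.
have F2S : F2 *m S = m2 *: F2 by apply: rS; exact: ch.
set d0 := (m0 - m1) * (m0 - m2).
set d1 := (m1 - m0) * (m1 - m2).
set d2 := (m2 - m0) * (m2 - m1).
set E0 := d0^-1 *: F0; set E1 := d1^-1 *: F1; set E2 := d2^-1 *: F2.
have hE (X Y : 'M[R]_3) (x y : R) : (x *: X) *m (y *: Y) = (x * y) *: (X *m Y).
  by rewrite -scalemxAl -scalemxAr scalerA.
have sym (a b : R) : ((S - a%:M) *m (S - b%:M))^T = (S - a%:M) *m (S - b%:M).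
  by rewrite trmx_mul !lin_T // lin_comm.
exists E0, E1, E2; split; last first.
  apply: mx3_eq; rewrite /E0 /E1 /E2 /F0 /F1 /F2 /d0 /d1 /d2; mxsimp; field; by rewrite ?subr_eq0 ?h01 ?h02 ?h12 ?h10 ?h20 ?h21.
split.
- by split; rewrite /E0 /E1 /E2 linearZ /= sym.
- split.
  + rewrite /E0 hE {2}/F0 (Xlin2 _ _ F0S) scalerA; congr (_ *: _); rewrite /d0; field; by rewrite ?subr_eq0 ?h01 ?h02 ?h12 ?h10 ?h20 ?h21.
  + rewrite /E1 hE {2}/F1 (Xlin2 _ _ F1S) scalerA; congr (_ *: _); rewrite /d1; field; by rewrite ?subr_eq0 ?h01 ?h02 ?h12 ?h10 ?h20 ?h21.
  + rewrite /E2 hE {2}/F2 (Xlin2 _ _ F2S) scalerA; congr (_ *: _); rewrite /d2; field; by rewrite ?subr_eq0 ?h01 ?h02 ?h12 ?h10 ?h20 ?h21.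
- split; split.
  + by rewrite /E0 /E1 hE /F1 (Xlin2 _ _ F0S) subrr mul0r scale0r scaler0.
  + by rewrite /E0 /E2 hE /F2 (Xlin2 _ _ F0S) subrr mul0r scale0r scaler0.
  + by rewrite /E1 /E2 hE /F2 (Xlin2 _ _ F1S) subrr mulr0 scale0r scaler0.
  + by rewrite /E1 /E0 hE /F0 (Xlin2 _ _ F1S) subrr mul0r scale0r scaler0.
  + by rewrite /E2 /E0 hE /F0 (Xlin2 _ _ F2S) subrr mulr0 scale0r scaler0.
  + by rewrite /E2 /E1 hE /F1 (Xlin2 _ _ F2S) subrr mulr0 scale0r scaler0.
- apply: mx3_eq; rewrite /E0 /E1 /E2 /F0 /F1 /F2 /d0 /d1 /d2; mxsimp; field;
  by rewrite ?subr_eq0 ?h01 ?h02 ?h12 ?h10 ?h20 ?h21.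
- split; rewrite /E0 /E1 /E2 mxtraceZ /F0 /F1 /F2 lin_mul mxtraceD raddfB /= mxtraceZ mxtrace_scalar t1 t2;
  rewrite /d0 /d1 /d2; field; by rewrite ?subr_eq0 ?h01 ?h02 ?h12 ?h10 ?h20 ?h21.
Qed.
Definition part2 L Ea Eb := [/\ Ea + Eb = L,
  [/\ Ea^T = Ea, Eb^T = Eb, Ea *m Ea = Ea & Eb *m Eb = Eb],
  [/\ Ea *m Eb = 0 & Eb *m Ea = 0], [/\ \tr Ea = 1 & \tr Eb = 1] &
  [/\ L *m Ea = Ea, Ea *m L = Ea, L *m Eb = Eb & Eb *m L = Eb]].

Lemma dLd (k : nat) L : (k < 3)%N ->
  delta_mx (inord k) (inord k) *m L *m delta_mx (inord k) (inord k) =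
  ent L k k *: (delta_mx (inord k) (inord k) : 'M[R]_3).
Proof. case: k => [|[|[|k]]] // _; apply: mx3_eq; mxsimp; ring. Qed.

Lemma trdL (k : nat) L : (k < 3)%N -> \tr ((delta_mx (inord k) (inord k) : 'M[R]_3) *m L) = ent L k k.
Proof. case: k => [|[|[|k]]] // _; rewrite tr3; mxsimp; ring. Qed.

Lemma split2 L : L^T = L -> L *m L = L -> \tr L = 2 -> exists Ea Eb, part2 L Ea Eb.
Proof.
move=> hs hi ht.
have [k hk hc] : exists2 k, (k < 3)%N & ent L k k != 0.
  move: ht; rewrite tr3 => ht.
  case: (eqVneq (ent L 0 0) 0) => h0; last by exists 0%N.
  case: (eqVneq (ent L 1 1) 0) => h1; last by exists 1%N.
  exists 2%N => //; apply/eqP => h2; move: ht; rewrite h0 h1 h2 !add0r => h.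
  have : (2 : R) != 0 by rewrite pnatr_eq0.
  by rewrite -h eqxx.
set d := (delta_mx (inord k) (inord k) : 'M[R]_3).
set c := ent L k k.
set Ea := c^-1 *: (L *m d *m L).
set Eb := L - Ea.
have hdd : d *m L *m d = c *: d := dLd L hk.
have hLEa : L *m Ea = Ea by rewrite /Ea -scalemxAr !mulmxA hi.
have hEaL : Ea *m L = Ea by rewrite /Ea -scalemxAl -(mulmxA (L *m d) L L) hi.
have hEaEa : Ea *m Ea = Ea.
  rewrite /Ea -scalemxAl -scalemxAr scalerA.
  have e : L *m d *m L *m (L *m d *m L) = L *m (d *m L *m d) *m L.
    by rewrite !mulmxA -(mulmxA (L *m d) L L) hi.
  rewrite e hdd -scalemxAr -scalemxAl scalerA; congr (_ *: _); field.
  by [].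
exists Ea, Eb; split.
- by rewrite /Eb addrC subrK.
- split.
  + by rewrite /Ea linearZ /= !trmx_mul trmx_delta hs mulmxA.
  + by rewrite /Eb linearB /= hs /Ea linearZ /= !trmx_mul trmx_delta hs mulmxA.
  + exact: hEaEa.
  + by rewrite /Eb mulmxBl !mulmxBr hi hLEa hEaL hEaEa subrr subr0.
- split.
  + by rewrite /Eb mulmxBr hEaL hEaEa subrr.
  + by rewrite /Eb mulmxBl hLEa hEaEa subrr.
- have tEa : \tr Ea = 1.
    rewrite /Ea mxtraceZ mxtrace_mulC mulmxA hi mxtrace_mulC trdL // mulVf //.
  split => //.
  by rewrite /Eb raddfB /= ht tEa; ring.
- split.
  + exact: hLEa.
  + exact: hEaL.
  + by rewrite /Eb mulmxBr hi hLEa.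
  + by rewrite /Eb mulmxBl hi hEaL.
Qed.
Definition dd (i : nat) : 'M[R]_3 := delta_mx (inord i) (inord i).

Lemma frame_delta : frame (dd 0) (dd 1) (dd 2).
Proof.
rewrite /dd; split.
- by split; apply: mx3_eq; mxsimp.
- by split; apply: mx3_eq; mxsimp; ring.
- by split; split; apply: mx3_eq; mxsimp; ring.
- by apply: mx3_eq; mxsimp; ring.
- by split; rewrite tr3; mxsimp; ring.
Qed.

Lemma spec_triple S m : S^T = S -> (S - m%:M) *m (S - m%:M) *m (S - m%:M) = 0 ->
  exists E0 E1 E2, frame E0 E1 E2 /\ S = comb E0 E1 E2 m m m.
Proof.
move=> hs ch.
set G := S - m%:M.
have GT : G^T = G by rewrite /G lin_T.
have hY : G *m G = 0.
  apply: sym_nil; first by rewrite trmx_mul GT.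
  by rewrite mulmxA ch mul0mx.
have hG : G = 0 by apply: sym_nil.
exists (dd 0), (dd 1), (dd 2); split; first exact: frame_delta.
rewrite (comb_scalar frame_delta); apply/eqP; rewrite -subr_eq0; apply/eqP; exact: hG.
Qed.

Lemma spec_double S m m2 : S^T = S -> m != m2 ->
  (S - m%:M) *m (S - m%:M) *m (S - m2%:M) = 0 -> \tr S = m + m + m2 ->
  exists E0 E1 E2, frame E0 E1 E2 /\ S = comb E0 E1 E2 m m m2.
Proof.
move=> hs hne ch ht.
have sn : m2 - m != 0 by rewrite subr_eq0 eq_sym.
set G := S - m%:M.
have hY : G *m (S - m2%:M) = 0.
  apply: sym_nil; first by rewrite trmx_mul !lin_T // lin_comm.
  by rewrite -!mulmxA (mulmxA (S - m2%:M) G) (lin_comm S m2 m) !mulmxA ch mul0mx.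
have GS : G *m S = m2 *: G.
  by apply/eqP; rewrite -subr_eq0 -mul_mx_scalar -mulmxBr hY.
have GG : G *m G = (m2 - m) *: G := Xlin _ GS.
set L2 := (m2 - m)^-1 *: G.
set L := 1%:M - L2.
have L2L2 : L2 *m L2 = L2.
  rewrite /L2 -scalemxAl -scalemxAr GG !scalerA; congr (_ *: _); field; exact: sn.
have L2T : L2^T = L2 by rewrite /L2 linearZ /= lin_T.
have LT : L^T = L by rewrite /L linearB /= trmx1 L2T.
have LL2 : L *m L2 = 0 by rewrite /L mulmxBl mul1mx L2L2 subrr.
have L2L : L2 *m L = 0 by rewrite /L mulmxBr mulmx1 L2L2 subrr.
have LL : L *m L = L by rewrite {1}/L mulmxBl mul1mx L2L subr0.
have trL2 : \tr L2 = 1.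
  rewrite /L2 mxtraceZ raddfB /= mxtrace_scalar ht; field; exact: sn.
have trL : \tr L = 2 by rewrite /L raddfB /= mxtrace_scalar trL2; ring.
have [Ea [Eb [hsum [sa sb ia ib] [pab pba] [ta tb] [lea eal leb ebl]]]] := split2 LT LL trL.
exists Ea, Eb, L2; split.
  split => //.
  - split; split => //.
    + by rewrite -eal -mulmxA LL2 mulmx0.
    + by rewrite -ebl -mulmxA LL2 mulmx0.
    + by rewrite -lea mulmxA L2L mul0mx.
    + by rewrite -leb mulmxA L2L mul0mx.
  - by rewrite hsum /L subrK.
rewrite /comb -scalerDr hsum /L /L2 /G; apply: mx3_eq; mxsimp; field; exact: sn.
Qed.
Lemma spec S m0 m1 m2 : S^T = S ->
  (S - m0%:M) *m (S - m1%:M) *m (S - m2%:M) = 0 ->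
  \tr S = m0 + m1 + m2 -> \tr (S *m S) = m0 ^+ 2 + m1 ^+ 2 + m2 ^+ 2 ->
  exists E0 E1 E2, frame E0 E1 E2 /\ S = comb E0 E1 E2 m0 m1 m2.
Proof.
move=> hs ch t1 t2.
case: (eqVneq m0 m1) => [e01|n01]; case: (eqVneq m0 m2) => [e02|n02];
  case: (eqVneq m1 m2) => [e12|n12].
- rewrite -e01 -e02 in ch *; exact: spec_triple.
- by rewrite -e01 -e02 eqxx in n12.
- by rewrite e01 e12 eqxx in n02.
- rewrite -e01 in ch t1 *; exact: spec_double.
- by rewrite e02 -e12 eqxx in n01.
- have ch' := ch_swap23 ch; rewrite -e02 in ch' t1.
  have [E0 [E1 [E2 [hF hS]]]] := spec_double hs n01 ch' (etrans t1 (addrAC _ _ _)).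
  exists E0, E2, E1; split; first exact: frame_swap12.
  by rewrite hS /comb -e02 addrAC.
- have ch' := ch_swap23 (ch_swap12 ch); rewrite -e12 in ch' t1.
  have n10 : m1 != m0 by rewrite eq_sym.
  have t1p : \tr S = m1 + m1 + m0 by rewrite t1; ring.
  have [E0 [E1 [E2 [hF hS]]]] := spec_double hs n10 ch' t1p.
  exists E2, E0, E1; split; first exact: frame_swap01 (frame_swap12 hF).
  by rewrite hS /comb -e12 addrC addrA.
- exact: spec_distinct.
Qed.
Lemma trD_sq A : \tr (\adj A) ^+ 2 <= 3 * \tr (\adj (A^T *m A)).
Proof.
have e : \tr (\adj (A^T *m A)) =
  cof3 A 0 0 ^+ 2 + cof3 A 0 1 ^+ 2 + cof3 A 0 2 ^+ 2 +
  cof3 A 1 0 ^+ 2 + cof3 A 1 1 ^+ 2 + cof3 A 1 2 ^+ 2 +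
  cof3 A 2 0 ^+ 2 + cof3 A 2 1 ^+ 2 + cof3 A 2 2 ^+ 2.
  by rewrite !tr3 !ent_adj // /cof3 /nx1 /nx2 /=; mxsimp; ring.
have f : \tr (\adj A) = cof3 A 0 0 + cof3 A 1 1 + cof3 A 2 2 by rewrite tr3 !ent_adj.
rewrite e f.
move: (cof3 A 0 0) (cof3 A 0 1) (cof3 A 0 2) (cof3 A 1 0) (cof3 A 1 1) (cof3 A 1 2)
  (cof3 A 2 0) (cof3 A 2 1) (cof3 A 2 2) => x y z u v w p q t.
have := sqr_ge0 (x - v); have := sqr_ge0 (v - t); have := sqr_ge0 (x - t).
have := sqr_ge0 y; have := sqr_ge0 z; have := sqr_ge0 u; have := sqr_ge0 w;
have := sqr_ge0 p; have := sqr_ge0 q.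
nra.
Qed.

Lemma sing_scalar (r a b T : R) : 0 < r -> r ^+ 2 = 2 -> 0 <= a -> 0 <= b ->
  T ^+ 2 <= 3 * (a ^+ 2 * b ^+ 2) -> a * b - T <= r * (a ^+ 2 + b ^+ 2).
Proof.
move=> hr hr2 ha hb hT.
have hr15 : r <= 3 / 2 by nra.
have hr1 : 1 <= r by nra.
have hab : 0 <= a * b by apply: mulr_ge0.
have h2 : 2 * (a * b) <= a ^+ 2 + b ^+ 2 by have := sqr_ge0 (a - b); nra.
set m := r * (a ^+ 2 + b ^+ 2) - a * b.
have hm : (2 * r - 1) * (a * b) <= m by rewrite /m; nra.
have hm0 : 0 <= m by nra.
have hm2 : 3 * (a ^+ 2 * b ^+ 2) <= m ^+ 2.
  have : (2 * r - 1) ^+ 2 * (a * b) ^+ 2 <= m ^+ 2.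
    have hp : 0 <= (2 * r - 1) * (a * b) by apply: mulr_ge0 => //; lra.
    rewrite -exprMn; nra.
  have : 3 <= (2 * r - 1) ^+ 2 by nra.
  nra.
have : - m <= T by nra.
rewrite /m; lra.
Qed.
Lemma Qbound (A : 'M[R]_3) (l : 'I_3 -> R) (r : R) : 0 < r -> r ^+ 2 = 2 ->
  (forall i, 0 <= l i) ->
  char_poly (A^T *m A) = \prod_(i < 3) ('X - (l i ^+ 2)%:P) ->
  `| l (inord 0) * l (inord 1) + l (inord 0) * l (inord 2) + l (inord 1) * l (inord 2)
     - \tr (\adj A) | <= r * (l (inord 0) ^+ 2 + l (inord 1) ^+ 2 + l (inord 2) ^+ 2).
Proof.
move=> hr hr2 hl hc.
have [t1 t2 dS ch] := charpoly_inv hc.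
set a := l (inord 0) in t1 t2 dS ch *; set b := l (inord 1) in t1 t2 dS ch *;
  set c := l (inord 2) in t1 t2 dS ch *.
have ha : 0 <= a := hl _. have hb : 0 <= b := hl _. have hc0 : 0 <= c := hl _.
set S := A^T *m A in t1 t2 dS ch.
have hs : S^T = S by rewrite /S trmx_mul trmxK.
have tadj : \tr (\adj S) = a ^+ 2 * b ^+ 2 + a ^+ 2 * c ^+ 2 + b ^+ 2 * c ^+ 2.
  have := newton_adj S; rewrite t1 t2 => h.
  have h2 : (2 : R) != 0 by rewrite pnatr_eq0.
  apply: (mulfI h2); rewrite h; ring.
have hT := trD_sq A; rewrite -/S tadj in hT.
set T := \tr (\adj A) in hT *.
rewrite ler_norml; apply/andP; split.
-
  have e1 : 0 <= a ^+ 2 + b ^+ 2 + c ^+ 2 by rewrite !addr_ge0 ?sqr_ge0.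
  have hr1 : 1 <= r by nra.
  have hs2 : 0 <= a * b + a * c + b * c by rewrite !addr_ge0 ?mulr_ge0.
  have he : 3 * (a ^+ 2 * b ^+ 2 + a ^+ 2 * c ^+ 2 + b ^+ 2 * c ^+ 2) <= (a ^+ 2 + b ^+ 2 + c ^+ 2) ^+ 2.
    have := sqr_ge0 (a ^+ 2 - b ^+ 2); have := sqr_ge0 (a ^+ 2 - c ^+ 2);
    have := sqr_ge0 (b ^+ 2 - c ^+ 2); nra.
  have hT2 : T <= a ^+ 2 + b ^+ 2 + c ^+ 2 by nra.
  nra.
-
  have [E0 [E1 [E2 [hF hSc]]]] := spec hs ch t1 t2.
  case: (eqVneq a 0) => [a0|an].
    have := @sing_scalar r b c T hr hr2 hb hc0.
    rewrite a0 in hT *; rewrite ?mul0r ?mulr0 ?expr0n /= ?mul0r ?mulr0 ?add0r ?addr0 in hT *.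
    by move=> /(_ hT).
  case: (eqVneq b 0) => [b0|bn].
    have := @sing_scalar r a c T hr hr2 ha hc0.
    rewrite b0 in hT *; rewrite ?mul0r ?mulr0 ?expr0n /= ?mul0r ?mulr0 ?add0r ?addr0 in hT *.
    by move=> /(_ hT).
  case: (eqVneq c 0) => [c0|cn].
    have := @sing_scalar r a b T hr hr2 ha hb.
    rewrite c0 in hT *; rewrite ?mul0r ?mulr0 ?expr0n /= ?mul0r ?mulr0 ?add0r ?addr0 in hT *.
    by move=> /(_ hT).
  apply: (key_inv hF hr hr2); rewrite ?lt0r ?an ?bn ?cn //.
Qed.
Lemma fin_scalar (r lam f tB e1 a b c T : R) : 0 < r -> r ^+ 2 = 2 -> 0 < lam -> lam <= f ->
  tB ^+ 2 <= 3 * f ^+ 2 -> e1 = f ^+ 2 + 2 * lam * tB + 3 * lam ^+ 2 ->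
  e1 = a ^+ 2 + b ^+ 2 + c ^+ 2 -> 0 <= a -> 0 <= b -> 0 <= c ->
  `| a * b + a * c + b * c - T | <= r * e1 ->
  `| (a * b + a * c + b * c - lam * (a + b + c)) - (T - lam * (tB + 3 * lam)) |
     <= r * f ^+ 2 + 24 * lam * f.
Proof.
move=> hr hr2 hl hlf htB he1 he1' ha hb hc hQ.
have hf : 0 < f by lra.
have htB2 : `|tB| <= 2 * f.
  have h1 : tB <= 2 * f by nra.
  have h2 : - (2 * f) <= tB by nra.
  by rewrite ler_norml h1 h2.
have hr15 : r <= 3 / 2 by nra.
have he1b : e1 <= (f + 2 * lam) ^+ 2.
  have : lam * tB <= lam * (2 * f).
    by apply: ler_wpM2l; [lra | apply: le_trans (ler_norm _) htB2].
  nra.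
set s1 := a + b + c.
have hs1 : 0 <= s1 by rewrite /s1; lra.
have hs1b : s1 <= 2 * (f + 2 * lam).
  have h3 : s1 ^+ 2 <= 3 * e1.
    rewrite /s1 he1'; have := sqr_ge0 (a - b); have := sqr_ge0 (a - c);
    have := sqr_ge0 (b - c); nra.
  have h4 : s1 ^+ 2 <= (2 * (f + 2 * lam)) ^+ 2 by nra.
  have h5 : 0 <= 2 * (f + 2 * lam) by lra.
  nra.
have hQ' := hQ; rewrite ler_norml in hQ'; case/andP: hQ' => hQ1 hQ2.
have htB2' := htB2; rewrite ler_norml in htB2'; case/andP: htB2' => hA1 hA2.
rewrite ler_norml; apply/andP; split.
- have : lam * s1 <= lam * (2 * (f + 2 * lam)) by apply: ler_wpM2l; lra.
  have : lam * (tB + 3 * lam) <= lam * (2 * f + 3 * lam) by apply: ler_wpM2l; lra.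
  have : - (lam * (2 * f + 3 * lam)) <= lam * (tB + 3 * lam).
    rewrite -mulrN; apply: ler_wpM2l; lra.
  have : r * e1 <= r * (f + 2 * lam) ^+ 2 by apply: ler_wpM2l; lra.
  rewrite /s1; nra.
- have : lam * s1 <= lam * (2 * (f + 2 * lam)) by apply: ler_wpM2l; lra.
  have : lam * s1 >= 0 by apply: mulr_ge0; lra.
  have : - (lam * (2 * f + 3 * lam)) <= lam * (tB + 3 * lam).
    rewrite -mulrN; apply: ler_wpM2l; lra.
  have : lam * (tB + 3 * lam) <= lam * (2 * f + 3 * lam) by apply: ler_wpM2l; lra.
  have : r * e1 <= r * (f + 2 * lam) ^+ 2 by apply: ler_wpM2l; lra.
  rewrite /s1; nra.
Qed.
End Alg.

Section Main.
Variable R : realType.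
Implicit Types A B : 'M[R]_3.

Ltac mxsimp := rewrite ?(ent0, ent_add, ent_sub, ent_opp, ent_scale, ent_tr, ent_mul) ?ent_scalar ?ent_delta //=.

Lemma frob_sq B : frob B ^+ 2 =
  ent B 0 0 ^+ 2 + ent B 0 1 ^+ 2 + ent B 0 2 ^+ 2 +
  ent B 1 0 ^+ 2 + ent B 1 1 ^+ 2 + ent B 1 2 ^+ 2 +
  ent B 2 0 ^+ 2 + ent B 2 1 ^+ 2 + ent B 2 2 ^+ 2.
Proof.
rewrite /frob sqr_sqrtr; last by apply: sumr_ge0 => i _; apply: sumr_ge0 => j _; apply: sqr_ge0.
rewrite sum3 !sum3 /ent; ring.
Qed.

Lemma trcof A : \tr (cof A) = \tr (\adj A).
Proof. by rewrite /mxtrace; apply: eq_bigr => i _; rewrite /cof !mxE. Qed.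

Lemma Pfun3 lam (l : 'I_3 -> R) : Defs.Pfun lam l =
  (l (inord 0) * l (inord 1) + l (inord 0) * l (inord 2) + l (inord 1) * l (inord 2))
  - lam * (l (inord 0) + l (inord 1) + l (inord 2)).
Proof.
rewrite /Defs.Pfun sum3.
do 3 rewrite big_mkcond sum3 /= ?inordK //=.
rewrite sum3; ring.
Qed.


Lemma ub lam (hlam : 0 < lam) A (l : 'I_3 -> R) : Defs.singvals A l -> lam <= frob (A - lam%:M) ->
  `|Defs.Pfun lam l - Defs.Nfun lam A| <=
    Num.sqrt 2 * frob (A - lam%:M) ^+ 2 + 24 * lam * frob (A - lam%:M).
Proof.
case=> hl hc hlf.
have hr : 0 < Num.sqrt 2 :> R by rewrite sqrtr_gt0.
have hr2 : Num.sqrt 2 ^+ 2 = 2 :> R by rewrite sqr_sqrtr // ler0n.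
have hQ := Qbound hr hr2 hl hc.
have [t1 _ _ _] := charpoly_inv hc.
set B := A - lam%:M in hlf *.
have hA : A = B + lam%:M by rewrite /B subrK.
have hf2 := frob_sq B.
rewrite Pfun3 /Defs.Nfun trcof.
set f := frob B in hf2 hlf *.
have he1 : \tr (A^T *m A) = f ^+ 2 + 2 * lam * \tr B + 3 * lam ^+ 2.
  rewrite hf2 hA !tr3; mxsimp; ring.
have htr : \tr A = \tr B + 3 * lam.
  by rewrite hA raddfD /= mxtrace_scalar mulr_natl.
have htB : \tr B ^+ 2 <= 3 * f ^+ 2.
  rewrite hf2 tr3.
  move: (ent B 0 0) (ent B 0 1) (ent B 0 2) (ent B 1 0) (ent B 1 1) (ent B 1 2)
    (ent B 2 0) (ent B 2 1) (ent B 2 2) => x y z u v w p q t.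
  have := sqr_ge0 (x - v); have := sqr_ge0 (v - t); have := sqr_ge0 (x - t).
  have := sqr_ge0 y; have := sqr_ge0 z; have := sqr_ge0 u; have := sqr_ge0 w;
  have := sqr_ge0 p; have := sqr_ge0 q.
  nra.
rewrite htr.
apply: (fin_scalar hr hr2 hlam hlf htB he1) => //.
by rewrite t1.
Qed.


Lemma ent_diag (d : 'rV[R]_3) (i j : nat) : (i < 3)%N -> (j < 3)%N ->
  ent (diag_mx d) i j = d 0 (inord i) *+ (i == j).
Proof. by move=> hi hj; rewrite /ent mxE; congr (_ *+ _); rewrite -val_eqE /= !inordK. Qed.

Lemma witness lam (hlam : 0 < lam) u : lam <= u ->
  exists A (l : 'I_3 -> R), [/\ Defs.singvals A l, frob (A - lam%:M) = 2 * u &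
    `|Defs.Pfun lam l - Defs.Nfun lam A| = 4 * Num.sqrt 2 * u * (u - lam)].
Proof.
move=> hu.
have hr : 0 < Num.sqrt 2 :> R by rewrite sqrtr_gt0.
have hr2 : Num.sqrt 2 ^+ 2 = 2 :> R by rewrite sqr_sqrtr // ler0n.
set r := Num.sqrt 2 in hr hr2 *.
set a0 := u - lam.
set b0 := lam + r * u.
have ha0 : 0 <= a0 by rewrite /a0 subr_ge0.
have hu0 : 0 < u by apply: lt_le_trans hu.
have hb0 : 0 <= b0 by rewrite /b0; apply: addr_ge0; [exact: ltW | apply: mulr_ge0; apply: ltW].
set d : 'rV[R]_3 := \row_(i < 3) (if (nat_of_ord i == 2)%N then b0 else - a0).
set l : 'I_3 -> R := fun i => if (nat_of_ord i == 2)%N then b0 else a0.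
exists (diag_mx d), l; split.
- split.
  + by move=> i; rewrite /l; case: ifP.
  + have e : (diag_mx d)^T *m diag_mx d = diag_mx (\row_(i < 3) (l i ^+ 2)).
      rewrite tr_diag_mx; apply/matrixP => i j; rewrite mul_diag_mx !mxE mulrnAr.
      by congr (_ *+ _); rewrite /l; case: ifP => _; rewrite ?mulrNN expr2.
    rewrite e char_poly_trig ?diag_mx_is_trig //; apply: eq_bigr => i _.
    by rewrite !mxE eqxx mulr1n.
- have hf2 := frob_sq (diag_mx d - lam%:M).
  rewrite !ent_sub !ent_diag // !ent_scalar //= !mxE !inordK //= in hf2.
  have hF : frob (diag_mx d - lam%:M) ^+ 2 = (2 * u) ^+ 2.
    rewrite hf2; apply/eqP; rewrite -subr_eq0; apply/eqP.
    transitivity ((r ^+ 2 - 2) * u ^+ 2); first by rewrite /b0 /a0; ring.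
    by rewrite hr2 subrr mul0r.
  apply/eqP; rewrite -(@eqrXn2 _ 2) //; first by rewrite hF.
    by rewrite /frob sqrtr_ge0.
  by apply: mulr_ge0 => //; apply: ltW.
- rewrite Pfun3 /Defs.Nfun trcof /l !inordK //=.
  have htA : \tr (diag_mx d) = - a0 - a0 + b0.
    by rewrite tr3 !ent_diag //= !mxE !inordK //=; ring.
  have hAA : \tr (diag_mx d *m diag_mx d) = a0 ^+ 2 + a0 ^+ 2 + b0 ^+ 2.
    by rewrite tr3 !ent_mul !ent_diag //= !mxE !inordK //=; ring.
  have htadj : \tr (\adj (diag_mx d)) = a0 ^+ 2 - 2 * a0 * b0.
    have h := newton_adj (diag_mx d); rewrite htA hAA in h.
    have h2 : (2 : R) != 0 by rewrite pnatr_eq0.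
    by apply: (mulfI h2); rewrite h; ring.
  rewrite htadj htA.
  have -> : a0 * a0 + a0 * b0 + a0 * b0 - lam * (a0 + a0 + b0) -
    (a0 ^+ 2 - 2 * a0 * b0 - lam * (- a0 - a0 + b0)) = 4 * r * u * (u - lam).
    by rewrite /b0 /a0; ring.
  rewrite ger0_norm //; apply: mulr_ge0; last by rewrite subr_ge0.
  by apply: mulr_ge0; [apply: mulr_ge0 => //; apply: ltW | apply: ltW].
Qed.


Lemma bounds lam (hlam : 0 < lam) e : 0 < e -> exists C : R, forall c0, C < c0 ->
  ((Num.sqrt 2 - e)%:E <= Defs.M2 lam c0)%E /\ (Defs.M2 lam c0 <= (Num.sqrt 2 + e)%:E)%E.
Proof.
move=> he.
have hr : 0 < Num.sqrt 2 :> R by rewrite sqrtr_gt0.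
have hr2 : Num.sqrt 2 ^+ 2 = 2 :> R by rewrite sqr_sqrtr // ler0n.
set r := Num.sqrt 2 in hr hr2 *.
have hr2' : r <= 2 by nra.
exists (Num.max lam (24 * lam / e)) => c0.
rewrite gt_max => /andP[hc1 hc2].
have hc0 : 0 < c0 by apply: lt_trans hc1.
split.
- set u := Num.max (c0 / 2) (Num.max lam (2 * lam / e)).
  have hu_c : c0 / 2 <= u by rewrite /u le_max lexx.
  have hu_l : lam <= u by rewrite /u !le_max lexx orbT.
  have hu_e : 2 * lam / e <= u by rewrite /u !le_max lexx !orbT.
  have hu0 : 0 < u by apply: lt_le_trans hu_l.
  have [A [l [hs hf hG]]] := witness hlam hu_l.
  apply: (@le_trans _ _ ((`|Defs.Pfun lam l - Defs.Nfun lam A| / frob (A - lam%:M) ^+ 2)%:E)).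
    rewrite lee_fin hf hG ler_pdivlMr ?exprn_gt0 ?mulr_gt0 //.
    have h1 : 2 * lam <= u * e by rewrite -ler_pdivrMr.
    have h2 : r * lam <= u * e by nra.
    rewrite -/r.
    have h3 : 0 <= u * (u * e - r * lam) by apply: mulr_ge0; lra.
    nra.
  apply: ereal_sup_ubound; exists A, l; split => //.
  rewrite hf; move: hu_c; rewrite ler_pdivrMr //; lra.
- apply: ge_ereal_sup => y [A [l [hf hs ->]]].
  rewrite lee_fin.
  set f := frob (A - lam%:M) in hf *.
  have hf0 : 0 < f by apply: lt_le_trans hf.
  have hlf : lam <= f by apply: ltW; apply: lt_le_trans hf.
  have hub := ub hlam hs hlf; rewrite -/f in hub.
  have h24 : 24 * lam < c0 * e by rewrite -ltr_pdivrMr.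
  have h24' : 24 * lam <= f * e by nra.
  rewrite ler_pdivrMr ?exprn_gt0 //.
  rewrite -/r in hub *.
  have h5 : 24 * lam * f <= e * f ^+ 2.
    have : 0 <= f * (f * e - 24 * lam) by apply: mulr_ge0; lra.
    nra.
  lra.
Qed.

End Main.

Theorem proposition3p6 (R : realType) (lam : R) (hlam : 0 < lam) :
  M2 lam c0 @[c0 --> +oo] --> (Num.sqrt 2 : R)%:E.
Proof.
apply/fine_cvgP; split.
- have [C hC] := bounds hlam (@ltr01 R).
  exists C; split; first by rewrite num_real.
  move=> c0 hc0; have [lo up] := hC _ hc0.
  by move: lo up; case: (Defs.M2 lam c0) => [x| |] //=.
- apply/cvgrPdist_le => e he.
  have [C hC] := bounds hlam he.
  exists C; split; first by rewrite num_real.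
  move=> c0 hc0 /=; have [lo up] := hC _ hc0.
  move: lo up; case: (Defs.M2 lam c0) => [x| |] //= lo up.
  rewrite !lee_fin in lo up; rewrite ler_norml; apply/andP; split; lra.
Qed.
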